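(* Let $(W,S)$ be a Coxeter system with $S$ finite and let $D_1,\dots,D_m$ be non-empty subsets of $W$ such that the multiplication map $D_1\times\cdots\times D_m\to W$ is a bijection and $D_1(u)\cdots D_m(u)=W(u)$. Then for every representation $\rho$ of the Hecke algebra $H_q(W,S)$, $$W(\rho,u)=D_1(\rho,u)\cdots D_m(\rho,u)\quad\text{in }\mathrm{End}(V_\rho)[[u]].$$
   Context: $\ell$ is the length function of $(W,S)$. For $D\subseteq W$, $D(u)=\sum_{w\in D}u^{\ell(w)}$. The Hecke algebra $H_q(W,S)$ (over a field $k$, with parameter $q$) is the associative algebra with basis $\{e_w\}_{w\in W}$ whose multiplication is characterized by $(e_s+1)(e_s-q)=0$ for $s\in S$ and $e_we_v=e_{wv}$ whenever $\ell(wv)=\ell(w)+\ell(v)$. For a representation $(\rho,V_\rho)$ of $H_q(W,S)$ and $D\subseteq W$, the twisted Poincaré series is $D(\rho,u)=\sum_{w\in D}\rho(e_w)u^{\ell(w)}\in\mathrm{End}(V_\rho)[[u]]$. *)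

(* Defs.v *)
From HB Require Import structures.
From mathcomp Require Import all_boot all_order all_algebra.
From Stdlib Require Import Classical ClassicalEpsilon.
Set Implicit Arguments. Unset Strict Implicit. Unset Printing Implicit Defensive.
Import GRing.Theory.

Section Coxeter.
Variable W : groupType.
Implicit Types (S : seq W) (w : W).

Fixpoint words S (n : nat) : seq (seq W) :=
  if n is n'.+1 then [seq s :: l | s <- S, l <- words S n'] else [:: [::]].

Definition wprod (l : seq W) : W := (\prod_(s <- l) s)%g.

Definition reach S w (n : nat) : bool := has (fun l => wprod l == w) (words S n).

(* the length function l(w) = min { n | w is a product of n elements of S }
   (default 0 if w is not in the subgroup generated by S, which never happens
   for a Coxeter system) *)
Definition coxlen S w : nat :=
  match excluded_middle_informative (exists n, reach S w n) with
  | left H => ex_minn H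
  | right _ => 0%N
  end.

(* (W,S) is a Coxeter system: S is a (finite) set of involutions generating W,
   and W has the presentation < S | (s t)^{m(s,t)} = 1 >, m(s,t) = order of st,
   expressed via the universal property of the presentation. *)
Definition coxeter_system S : Prop :=
  [/\ forall s, s \in S -> s != 1%g /\ (s * s = 1)%g,
      forall w, exists l : seq W, all (mem S) l /\ wprod l = w &
      forall (G : groupType) (f : W -> G),
        (forall s t (n : nat), s \in S -> t \in S ->
            ((s * t) ^+ n = 1)%g -> ((f s * f t) ^+ n = 1)%g) ->
        exists phi : W -> G,
          (forall x y, phi (x * y)%g = (phi x * phi y)%g) /\
          (forall s, s \in S -> phi s = f s)].

Definition sphere S (n : nat) : seq W :=
  [seq w <- undup [seq wprod l | l <- words S n] | coxlen S w == n].

(* Poincare series D(u) = sum_{w in D} u^{l(w)} in Z[[u]], as its sequence of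
   coefficients *)
Definition poincare S (D : pred W) : nat -> int :=
  fun n => (\sum_(w <- sphere S n | w \in D) 1)%R.

Definition sermul (R : pzRingType) (a b : nat -> R) : nat -> R :=
  fun n => (\sum_(i < n.+1) a i * b (n - i)%N)%R.
Definition serone (R : pzRingType) : nat -> R := fun n => ((n == 0%N)%:R)%R.
Definition serprod (R : pzRingType) (l : seq (nat -> R)) : nat -> R :=
  foldr (@sermul R) (@serone R) l.

(* Formal power series with coefficients in End(V) (endomorphisms given as
   functions V -> V), their product (composition) and ordered products *)
Definition endmul (k : pzRingType) (V : lmodType k) (A B : nat -> V -> V)
  : nat -> V -> V :=
  fun n x => (\sum_(i < n.+1) A i (B (n - i)%N x))%R.
Definition endone (k : pzRingType) (V : lmodType k) : nat -> V -> V :=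
  fun n x => if n == 0%N then x else 0%R.
Definition endprod (k : pzRingType) (V : lmodType k) (l : seq (nat -> V -> V))
  : nat -> V -> V := foldr (@endmul k V) (@endone k V) l.

Definition twisted (k : pzRingType) (V : lmodType k) S (rho : W -> V -> V)
  (D : pred W) : nat -> V -> V :=
  fun n x => (\sum_(w <- sphere S n | w \in D) rho w x)%R.

(* A representation of the Hecke algebra H_q(W,S) on V, given by the images
   rho w = rho(e_w) of the basis elements e_w: linear maps such that
   e_1 acts as the identity, (e_s + 1)(e_s - q) acts as 0, and
   e_w e_v = e_{wv} whenever l(wv) = l(w) + l(v). *)
Definition hecke_rep (k : fieldType) (q : k) (V : lmodType k) S
  (rho : W -> V -> V) : Prop :=
  [/\ forall w (a : k) (x y : V), rho w (a *: x + y)%R = (a *: rho w x + rho w y)%R,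
      forall x, rho 1%g x = x,
      forall s, s \in S -> forall x : V,
        (rho s (rho s x - q *: x) + (rho s x - q *: x))%R = 0%R &
      forall w v, coxlen S (w * v)%g = (coxlen S w + coxlen S v)%N ->
        forall x, rho (w * v)%g x = rho w (rho v x)].

Definition mult_bijective (m : nat) (D : 'I_m -> pred W) : Prop :=
  (forall w, exists d : 'I_m -> W, (forall i, d i \in D i) /\ (\prod_(i < m) d i)%g = w)
  /\ (forall d d' : 'I_m -> W, (forall i, d i \in D i) -> (forall i, d' i \in D i) ->
        (\prod_(i < m) d i)%g = (\prod_(i < m) d' i)%g -> forall i, d i = d' i).

End Coxeter.

(* Main.v *)
Require Import Defs.
From HB Require Import structures.
From mathcomp Require Import all_boot all_order all_algebra.
From Stdlib Require Import Classical ClassicalEpsilon.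
Set Implicit Arguments. Unset Strict Implicit. Unset Printing Implicit Defensive.
Import GRing.Theory.

Section Aux.
Variable W : groupType.
Variable S : seq W.

Lemma mem_words n l : (l \in words S n) = (size l == n) && all (mem S) l.
Proof.
elim: n l => [|n IH] [|a l].
- by [].
- by rewrite /= inE.
- by apply/negbTE/negP => /allpairsP[[x y] /= [_ _]].
- apply/allpairsP/idP => [[[x y] /= [xS yw [-> ->]]]|/andP[/eqP [szl] /andP[aS al]]].
    move: yw. change (y \in words S n -> [&& (size y).+1 == n.+1, x \in S & all (mem S) y]). rewrite IH xS. by rewrite eqSS /=.
  exists (a, l); split => //. change (l \in words S n). by rewrite IH szl eqxx.
Qed.

Lemma wprod_cat (l1 l2 : seq W) : wprod (l1 ++ l2) = (wprod l1 * wprod l2)%g.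
Proof. by rewrite /wprod big_cat. Qed.

Lemma reach_mul x y a b : reach S x a -> reach S y b -> reach S (x * y)%g (a + b).
Proof.
move=> /hasP[l1 l1w /eqP <-] /hasP[l2 l2w /eqP <-].
apply/hasP; exists (l1 ++ l2); last by rewrite wprod_cat.
move: l1w l2w; rewrite !mem_words size_cat all_cat.
move=> /andP[H1 H2] /andP[H3 H4]. by rewrite (eqP H1) (eqP H3) eqxx H2 H4.
Qed.

Hypothesis gen : forall w, exists n, reach S w n.

Lemma coxlen_reach w : reach S w (coxlen S w).
Proof.
rewrite /coxlen; case: excluded_middle_informative => [H|H]; last by case: H.
by case: ex_minnP.
Qed.

Lemma coxlen_min w n : reach S w n -> coxlen S w <= n.
Proof.
move=> Hr; rewrite /coxlen; case: excluded_middle_informative => [H|H]; last by [].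
by case: ex_minnP => k _; apply.
Qed.

Lemma coxlen_mul x y : coxlen S (x * y)%g <= coxlen S x + coxlen S y.
Proof. by apply: coxlen_min; apply: reach_mul; apply: coxlen_reach. Qed.

Lemma coxlen1 : coxlen S 1%g = 0.
Proof.
apply/eqP; rewrite -leqn0; apply: coxlen_min.
by rewrite /reach /= /wprod big_nil eqxx.
Qed.

Lemma mem_sphere n w : (w \in sphere S n) = (coxlen S w == n).
Proof.
rewrite /sphere mem_filter; case: eqP => //= <-.
rewrite mem_undup; have /hasP[l lw /eqP wl] := coxlen_reach w.
by apply/mapP; exists l.
Qed.

Lemma uniq_sphere n : uniq (sphere S n).
Proof. by rewrite /sphere filter_uniq // undup_uniq. Qed.


Lemma uniq_flat_gen (T : eqType) (f : nat -> seq T) (g : T -> nat) :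
  (forall i x, x \in f i -> g x = i) -> (forall i, uniq (f i)) ->
  forall a b, uniq (flatten [seq f i | i <- iota a b]).
Proof.
move=> Hg Hu a b; elim: b a => [|b IH] a //=.
rewrite cat_uniq Hu IH andbT /=; apply/hasPn => x /flatten_mapP[i].
rewrite mem_iota => /andP[ai _] xi; apply/negP => xa.
by move: ai; rewrite -(Hg _ _ xi) (Hg _ _ xa) ltnn.
Qed.

Definition flat n := flatten [seq sphere S i | i <- iota 0 n.+1].

Lemma mem_flat n w : (w \in flat n) = (coxlen S w <= n).
Proof.
apply/flatten_mapP/idP => [[i] | H].
  by rewrite mem_iota mem_sphere => /andP[_ ilt] /eqP ->.
by exists (coxlen S w); rewrite ?mem_sphere // mem_iota.
Qed.

Lemma uniq_flat n : uniq (flat n).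
Proof.
apply: (uniq_flat_gen (g := coxlen S)) => [i x|i]; last exact: uniq_sphere.
by rewrite mem_sphere => /eqP.
Qed.

Definition slen (t : seq W) := sumn (map (coxlen S) t).

Fixpoint G (Ds : seq (pred W)) (n : nat) : seq (seq W) :=
  match Ds with
  | [::] => if n == 0 then [:: [::]] else [::]
  | P :: Ds' => [seq d :: t | d <- [seq d <- flat n | d \in P],
                              t <- G Ds' (n - coxlen S d)]
  end.

Definition goodt (Ds : seq (pred W)) (t : seq W) :=
  all2 (fun d (P : pred W) => d \in P) t Ds.

Lemma mem_G Ds n t : (t \in G Ds n) = goodt Ds t && (slen t == n).
Proof.
elim: Ds n t => [|P Ds IH] n t.
  by case: n; case: t.
apply/allpairsPdep/idP => [[d [t' [dP t'G ->]]]|].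
  move: dP t'G; rewrite mem_filter mem_flat IH => /andP[dP dn] /andP[g' /eqP s'].
  by rewrite /goodt /= dP; apply/andP; split => //; rewrite /slen /= -/(slen t') s' subnKC.
case: t => [|d t'] //= /andP[/andP[dP g'] /eqP sn].
exists d, t'; split => //.
  by rewrite mem_filter dP mem_flat -sn /slen /= leq_addr.
by rewrite IH g' -sn /slen /= addKn eqxx.
Qed.

Lemma uniq_G Ds n : uniq (G Ds n).
Proof.
elim: Ds n => [|P Ds IH] n /=; first by case: n.
apply: allpairs_uniq_dep => //.
- by rewrite filter_uniq // uniq_flat.
- by move=> [d1 t1] [d2 t2] _ _ /= [-> ->].
Qed.

Lemma sum_G (R : nmodType) P Ds n (F : seq W -> R) :
  (\sum_(t <- G (P :: Ds) n) F t =
  \sum_(i < n.+1) \sum_(w <- sphere S i | w \in P) \sum_(t <- G Ds (n - i)) F (w :: t))%R.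
Proof.
rewrite /= big_allpairs_dep big_filter /flat big_flatten big_map -[iota 0 n.+1]/(index_iota 0 n.+1) big_mkord /=.
apply: eq_bigr => i _; rewrite big_seq_cond [RHS]big_seq_cond; apply: eq_bigr => w /andP[]; rewrite mem_sphere => /eqP -> _ //.

Qed.


Lemma size_G Ds n :
  ((size (G Ds n))%:R : int)%R = serprod [seq poincare S P | P <- Ds] n.
Proof.
elim: Ds n => [|P Ds IH] n.
  by case: n.
rewrite -sum1_size natr_sum sum_G /= /sermul; apply: eq_bigr => i _.
rewrite -IH /poincare mulr_suml; apply: eq_bigr => w _.
by rewrite mul1r -sum1_size natr_sum.
Qed.

Lemma endprod_G (k : fieldType) (V : lmodType k) (rho : W -> V -> V)
  (Hlin : forall w (a : k) (x y : V), rho w (a *: x + y)%R = (a *: rho w x + rho w y)%R)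
  Ds n x :
  endprod [seq twisted S rho P | P <- Ds] n x = (\sum_(t <- G Ds n) foldr rho x t)%R.
Proof.
have r0 w : rho w 0%R = 0%R.
  have := Hlin w 1%R 0%R 0%R; rewrite !scale1r addr0 => H.
  by apply: (addrI (rho w 0%R)); rewrite addr0 -H.
have rD w a b : rho w (a + b)%R = (rho w a + rho w b)%R.
  by rewrite -[a]scale1r Hlin !scale1r.
have rS w0 (s : seq (seq W)) (F : seq W -> V) :
    rho w0 (\sum_(t <- s) F t)%R = (\sum_(t <- s) rho w0 (F t))%R.
  elim: s => [|a s IHs]; first by rewrite !big_nil r0.
  by rewrite !big_cons rD IHs.
elim: Ds n => [|P Ds IH] n.
  by case: n => [|n] /=; rewrite /endone /= ?big_cons ?big_nil ?addr0.
rewrite sum_G /= /endmul; apply: eq_bigr => i _.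
rewrite /twisted IH; apply: eq_bigr => w _.
by rewrite rS.
Qed.

Definition lprod (t : seq W) : W := foldr (fun a b => a * b)%g 1%g t.

Lemma coxlen_lprod t : coxlen S (lprod t) <= slen t.
Proof.
elim: t => [|d t IH] /=; first by rewrite coxlen1.
apply: leq_trans (coxlen_mul _ _) _; rewrite /slen /= leq_add2l; exact: IH.
Qed.


Lemma goodt_nth Ds t : goodt Ds t ->
  size t = size Ds /\ forall i, i < size Ds -> nth 1%g t i \in nth xpredT Ds i.
Proof.
elim: t Ds => [|d t IH] [|P Ds] //= /andP[dP /IH [szt Ht]].
split; first by rewrite szt.
by case => [|i] //= /Ht.
Qed.

Lemma lprod_big t : lprod t = (\prod_(x <- t) x)%g.
Proof. by elim: t => [|d t IH] /=; rewrite ?big_nil ?big_cons ?IH. Qed.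

Lemma rho_lprod (k : fieldType) (q : k) (V : lmodType k) (rho : W -> V -> V)
  (Hrho : hecke_rep q S rho) t x :
  coxlen S (lprod t) = slen t -> rho (lprod t) x = foldr rho x t.
Proof.
case: Hrho => _ H1 _ Hm.
elim: t => [|d t IH] /=; first by rewrite H1.
move=> E.
have A := coxlen_mul d (lprod t).
have B := coxlen_lprod t.
have E1 : coxlen S (lprod t) = slen t.
  apply/eqP; rewrite eqn_leq B /=.
  by rewrite -(leq_add2l (coxlen S d)) -[X in X <= _]/(slen (d :: t)) -E.
rewrite Hm ?IH //.
by rewrite E E1.
Qed.

End Aux.

Theorem mainTheorem5 (W : groupType) (S : seq W) (m : nat) (D : 'I_m -> pred W)
  (Hcox : coxeter_system S)
  (Hne : forall i, exists d, d \in D i)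
  (Hbij : mult_bijective D)
  (Hpoin : forall n, serprod [seq poincare S (D i) | i <- enum 'I_m] n
                     = poincare S predT n)
  (k : fieldType) (q : k) (V : lmodType k) (rho : W -> V -> V)
  (Hrho : hecke_rep q S rho) :
  forall (n : nat) (x : V),
    twisted S rho predT n x
    = endprod [seq twisted S rho (D i) | i <- enum 'I_m] n x.
Proof.
move=> n x.
have gen : forall w, exists n, reach S w n.
  case: Hcox => _ Hg _ w; have [l [lS <-]] := Hg w.
  by exists (size l); apply/hasP; exists l; rewrite ?mem_words ?eqxx.
set Ds := [seq D i | i <- enum 'I_m].
have Hsize n0 : size (G S Ds n0) = size (sphere S n0).
  have := Hpoin n0; rewrite (_ : [seq poincare S (D i) | i <- enum 'I_m]
                              = [seq poincare S P | P <- Ds]); last by rewrite /Ds -map_comp.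
  rewrite -size_G // /poincare.
  under eq_bigl do rewrite inE.
  move=> H.
  have H2 : ((size (G S Ds n0))%:R : int)%R = (size (sphere S n0))%:R%R.
    by rewrite H -sum1_size natr_sum.
  by move/eqP: H2; rewrite Num.Theory.eqr_nat => /eqP.
have szDs : size Ds = m by rewrite size_map size_enum_ord.
have nthDs (i : 'I_m) : nth xpredT Ds i = D i.
  by rewrite (nth_map i) ?size_enum_ord // nth_ord_enum.
have Hinj t t' : goodt Ds t -> goodt Ds t' -> lprod t = lprod t' -> t = t'.
  move=> /goodt_nth [szt Ht] /goodt_nth [szt' Ht'] E.
  have := (proj2 Hbij) (fun i => nth 1%g t i) (fun i => nth 1%g t' i).
  have P1 : forall i : 'I_m, nth 1%g t i \in D i.
    by move=> i; rewrite -nthDs; apply: Ht; rewrite szDs.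
  have P2 : forall i : 'I_m, nth 1%g t' i \in D i.
    by move=> i; rewrite -nthDs; apply: Ht'; rewrite szDs.
  move=> /(_ P1 P2) H.
  have H' : forall i : 'I_m, nth 1%g t i = nth 1%g t' i.
    apply: H.
    rewrite -!(big_mkord xpredT) -szDs -{1}szt -szt'.
    by rewrite -!(big_nth 1%g xpredT (fun x => x)) -!lprod_big.
  apply: (@eq_from_nth _ 1%g); first by rewrite szt szt'.
  by move=> j; rewrite szt szDs => jm; apply: (H' (Ordinal jm)).
have Key n0 t : t \in G S Ds n0 -> coxlen S (lprod t) = n0.
  rewrite mem_G // => /andP[gt /eqP st].
  apply/eqP; rewrite eqn_leq -{1}st coxlen_lprod //= leqNgt; apply/negP => lt.
  set AK := flatten [seq G S Ds j | j <- iota 0 n0].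
  have uAK : uniq AK.
    apply: (uniq_flat_gen (g := slen S)) => [j y|j]; last exact: uniq_G.
    by rewrite mem_G // => /andP[_ /eqP].
  have memAK y : y \in AK -> goodt Ds y /\ slen S y < n0.
    case/flatten_mapP => j; rewrite mem_iota mem_G // => /andP[_ jn] /andP[gy /eqP ->].
    by [].
  have n0pos : 0 < n0 by case: n0 {st memAK AK uAK} lt.
  have sub : {subset [seq lprod y | y <- AK] <= flat S n0.-1}.
    move=> w /mapP[y yA ->]; rewrite mem_flat //.
    have [_ ly] := memAK y yA.
    rewrite -ltnS prednK //; exact: leq_ltn_trans (coxlen_lprod _ _) ly.
  have uM : uniq [seq lprod y | y <- AK].
    rewrite map_inj_in_uniq // => y y' /memAK[gy _] /memAK[gy' _]; exact: Hinj.
  have szM : size (flat S n0.-1) <= size [seq lprod y | y <- AK].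
    rewrite size_map /flat /AK !size_flatten /shape -!map_comp prednK //.
    by rewrite (eq_map (fun j => esym (Hsize j))).
  have [_ eqM] := uniq_min_size uM sub szM.
  have : lprod t \in flat S n0.-1.
    by rewrite mem_flat // -ltnS prednK.
  rewrite -eqM => /mapP[y yA E].
  have [gy ly] := memAK y yA.
  by move: ly; rewrite -(Hinj _ _ gt gy E) st ltnn.
rewrite (_ : [seq twisted S rho (D i) | i <- enum 'I_m]
            = [seq twisted S rho P | P <- Ds]); last by rewrite /Ds -map_comp.
have [Hlin _ _ _] := Hrho.
rewrite endprod_G //.
rewrite (eq_big_seq (fun t => rho (lprod t) x)); last first.
  move=> t tG; rewrite (rho_lprod gen Hrho) //.
  rewrite (Key _ _ tG); move: tG; rewrite mem_G // => /andP[_ /eqP] //.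
rewrite -(big_map (@lprod W) xpredT (fun w => rho w x)) /twisted.
rewrite (eq_bigl xpredT) //.
have sub : {subset [seq lprod y | y <- G S Ds n] <= sphere S n}.
  by move=> w /mapP[y yG ->]; rewrite mem_sphere // (Key _ _ yG).
have uM : uniq [seq lprod y | y <- G S Ds n].
  rewrite map_inj_in_uniq ?uniq_G // => y y'; rewrite !mem_G // => /andP[gy _] /andP[gy' _].
  exact: Hinj.
have szM : size (sphere S n) <= size [seq lprod y | y <- G S Ds n].
  by rewrite size_map Hsize.
have [_ eqM] := uniq_min_size uM sub szM.
apply: perm_big; apply: uniq_perm.
- exact: uniq_sphere.
- exact: uM.
- move=> w; by rewrite eqM.
Qed.
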